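(* Let $s \ge 2$, let $D = \{(t_1, \ldots, t_{s-1}) \in \mathbb{R}^{s-1} : 0 < t_1 < t_2 < \cdots < t_{s-1} < 1\}$, and set $t_s = 1$. For $i = 1, \ldots, s$ define $K_i : D \to \mathbb{R}$ by \[ K_i(t_1, \ldots, t_{s-1}) = \prod_{j=1,\ldots,s,\ j \neq i} \frac{t_j}{t_j - t_i}. \] Let $F : D \to \mathbb{R}^{s-1}$ be $F(t_1,\ldots,t_{s-1}) = (K_1, \ldots, K_{s-1})$, and let $J$ be its Jacobian matrix. Then at every point of $D$, \[ \det(J) = (s-1)! \prod_{i=1}^{s-1} \frac{K_i}{t_s - t_i}. \] *)

(* Defs.v *)
From HB Require Import structures.
From mathcomp Require Import all_boot all_order all_algebra.
From mathcomp Require Import all_classical all_reals all_analysis.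
Set Implicit Arguments. Unset Strict Implicit. Unset Printing Implicit Defensive.
Import Order.TTheory GRing.Theory Num.Theory.
Import numFieldNormedType.Exports.
Local Open Scope ring_scope.

(* Throughout, s = n.+1, so points of D live in R^(s-1) = 'rV[R]_n. *)

(* t_ext t j = t_(j+1) for j < n (0-based), and t_s = 1 for j = n. *)
Definition t_ext (R : realType) (n : nat) (t : 'rV[R]_n) (j : 'I_n.+1) : R :=
  match ltnP j n with
  | LtnNotGeq Hj => t 0 (Ordinal Hj)
  | _ => 1
  end.

Definition inD (R : realType) (n : nat) (t : 'rV[R]_n) : Prop :=
  (forall j : 'I_n.+1, 0 < t_ext t j) /\
  (forall i j : 'I_n.+1, (i < j)%N -> t_ext t i < t_ext t j).

Definition K (R : realType) (n : nat) (i : 'I_n.+1) (t : 'rV[R]_n) : R :=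
  \prod_(j < n.+1 | j != i) (t_ext t j / (t_ext t j - t_ext t i)).

Definition jacobianF (R : realType) (n : nat) (t : 'rV[R]_n) : 'M[R]_n :=
  \matrix_(i < n, j < n) ('D_(delta_mx 0 j) (K (widen_ord (leqnSn n) i)) t).

(* Main.v *)
Require Import Defs.
From HB Require Import structures.
From mathcomp Require Import all_boot all_order all_algebra.
From mathcomp Require Import all_classical all_reals all_analysis.
From mathcomp Require Import zify ring.
Import Order.TTheory GRing.Theory Num.Theory.
Local Open Scope ring_scope.
Set Implicit Arguments. Unset Strict Implicit. Unset Printing Implicit Defensive.
Import numFieldNormedType.Exports.

Section Poly.
Variable R : fieldType.
Variable u : R.

Definition pp (m : nat) : {poly R} := 'X^m * ('X - u%:P).
Definition qd (c : R) (m : nat) : {poly R} :=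
  (pp m - (pp m).[c]%:P) %/ ('X - c%:P).

Lemma qdE c m : pp m - (pp m).[c]%:P = qd c m * ('X - c%:P).
Proof.
rewrite /qd divpK //; apply/polyXsubCP.
by rewrite hornerD hornerN hornerC subrr.
Qed.

Lemma pp_coef m i : (pp m)`_i = if i == m.+1 then 1 else if i == m then - u else 0.
Proof.
rewrite /pp coefXnM coefB coefX coefC.
case: ltnP => [lt|ge].
  have h1 : (i == m.+1) = false by apply/eqP; lia.
  have h2 : (i == m) = false by apply/eqP; lia.
  by rewrite h1 h2.
case: (i =P m.+1) => [->|ne]; first by rewrite subSnn /= subr0.
case: (i =P m) => [->|ne2]; first by rewrite subnn /= sub0r.
have h1 : (i - m == 1)%N = false by apply/eqP; lia.
have h2 : (i - m == 0)%N = false by apply/eqP; lia.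
by rewrite h1 h2 subr0.
Qed.

Lemma size_pp m : (size (pp m) <= m.+2)%N.
Proof.
apply/leq_sizeP => j hj; rewrite pp_coef.
by rewrite gtn_eqF // gtn_eqF //; apply: leq_trans hj.
Qed.

Lemma size_qd c m : (size (qd c m) <= m.+1)%N.
Proof.
rewrite /qd size_divp ?polyXsubC_eq0 // size_XsubC /=.
rewrite leq_subLR add1n (leq_trans (size_add _ _)) // geq_max size_pp /=.
by rewrite size_opp size_polyC; case: (_ != 0).
Qed.

Lemma qd_coef c m : (qd c m)`_m = 1.
Proof.
have := congr1 (fun p : {poly R} => p`_m.+1) (qdE c m).
rewrite coefB coefC /= pp_coef eqxx subr0 mulrBr coefB coefMX /= coefMC.
rewrite (leq_sizeP _ _ (size_qd c m)) // mul0r subr0 => ->. by [].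
Qed.

Lemma qd_eval x c m : x != c -> (qd c m).[x] = ((pp m).[x] - (pp m).[c]) / (x - c).
Proof.
move=> ne; have := congr1 (fun p : {poly R} => p.[x]) (qdE c m).
rewrite /= hornerD hornerN hornerC => ->.
by rewrite hornerM hornerD hornerN hornerX hornerC mulfK // subr_eq0.
Qed.

Lemma qd_evalc c m : (qd c m).[c] = (pp m)^`().[c].
Proof.
have := congr1 (fun p : {poly R} => (p^`()).[c]) (qdE c m).
rewrite /= derivB derivC subr0 derivM derivXsubC mulr1 => ->.
by rewrite hornerD hornerM hornerD hornerN hornerX hornerC subrr mulr0 add0r.
Qed.

End Poly.


Section Mat.
Variable R : fieldType.
Variable n : nat.
Variable a : 'I_n.+1 -> R.
Local Notation u := (a ord_max).
Local Notation ι := (widen_ord (leqnSn n)).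

Definition QQ (m : nat) : {poly R} := (pp u m)^`() - \sum_(j < n.+1) qd u (a j) m.

Lemma QQ_coef_gt m l : (m < l)%N -> (QQ m)`_l = 0.
Proof.
move=> ml; rewrite /QQ coefB coef_deriv coef_sum pp_coef.
have h1 : (l.+1 == m.+1) = false by apply/eqP; lia.
have h2 : (l.+1 == m) = false by apply/eqP; lia.
rewrite h1 h2 mul0rn big1 ?subr0 // => j _.
by apply/(leq_sizeP _ _ (size_qd _ _ _)).
Qed.

Lemma QQ_coef_m m : (QQ m)`_m = m.+1%:R - n.+1%:R.
Proof.
rewrite /QQ coefB coef_deriv coef_sum pp_coef eqxx.
under eq_bigr do rewrite qd_coef.
by rewrite sumr_const card_ord.
Qed.

Lemma size_QQ m : (m < n)%N -> (size (QQ m) <= n)%N.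
Proof. by move=> mn; apply/leq_sizeP => j hj; apply: QQ_coef_gt; lia. Qed.

Lemma sum_iota (F : 'I_n.+1 -> R) j : F ord_max = 0 ->
  \sum_(k < n) (j == ι k)%:R * F (ι k) = F j.
Proof.
move=> F0; case: (ltnP j n) => hj.
  have -> : j = ι (Ordinal hj) by apply/val_inj.
  rewrite (bigD1 (Ordinal hj)) //= eqxx mul1r big1 ?addr0 // => k hk.
  have -> : (ι (Ordinal hj) == ι k) = false.
    apply/eqP => /(congr1 val) /= h; move/eqP: hk; apply; exact/val_inj.
  by rewrite mul0r.
have -> : j = ord_max by apply/val_inj => /=; have := ltn_ord j; lia.
rewrite F0 big1 // => k _.
have -> : (ord_max == ι k) = false.
  by apply/eqP => /(congr1 val) /= h; have := ltn_ord k; lia.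
by rewrite mul0r.
Qed.


Definition EE : 'M[R]_n := \matrix_(i < n, k < n)
  \sum_(j < n.+1 | j != ι i)
     (((ι i == ι k)%:R * a j - (j == ι k)%:R * a (ι i)) / ((a j - a (ι i)) * a j)).

Hypothesis a_inj : forall i j, i != j -> a i != a j.
Hypothesis a_nz : forall i, a i != 0.

Lemma EW : EE *m (\matrix_(k < n, m < n) (a (ι k) * (pp u m).[a (ι k)])) =
  diag_mx (\row_i a (ι i)) *m ((\matrix_(i < n, l < n) a (ι i) ^+ l)
     *m \matrix_(l < n, m < n) (QQ m)`_l).
Proof.
apply/matrixP => i m; rewrite mul_diag_mx !mxE.
set F := fun j => a j * (pp u m).[a j].
have F0 : F ord_max = 0 by rewrite /F /pp hornerM hornerD hornerN hornerX hornerC subrr !mulr0.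
under eq_bigr do rewrite !mxE.
under [in RHS]eq_bigr do rewrite !mxE mulrC.
rewrite -(horner_coef_wide _ (size_QQ (ltn_ord m))).
transitivity (\sum_(k < n) \sum_(j < n.+1 | j != ι i)
   ((ι i == ι k)%:R * F (ι k) * (a j / ((a j - a (ι i)) * a j))
    - (j == ι k)%:R * F (ι k) * (a (ι i) / ((a j - a (ι i)) * a j)))).
  apply: eq_bigr => k _; rewrite mulr_suml; apply: eq_bigr => j _.
  rewrite /F; ring.
rewrite exchange_big /=.
under eq_bigr do rewrite sumrB -!mulr_suml !sum_iota //.
rewrite /QQ hornerD hornerN horner_sum [X in _ - X](bigD1 (ι i)) //= qd_evalc.
rewrite opprD addrA subrr add0r mulrN mulr_sumr -sumrN.
apply: eq_bigr => j hj.
have h1 : a j - a (ι i) != 0 by rewrite subr_eq0; apply: a_inj.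
have h2 : a (ι i) - a j != 0 by rewrite subr_eq0 eq_sym; apply: a_inj.
rewrite qd_eval ?(a_inj hj) 1?eq_sym ?(a_inj hj) // /F.
field.
by rewrite h1 h2 (a_nz j).
Qed.


Lemma prod_fact m : (\prod_(i < m) (m - i) = m`!)%N.
Proof.
elim: m => [|m IH]; first by rewrite big_ord0.
by rewrite big_ord_recl subn0 factS; congr (_ * _)%N; rewrite -IH; apply: eq_bigr => i _; rewrite subSS.
Qed.

Lemma detEE : \det EE = n`!%:R / \prod_(i < n) (u - a (ι i)).
Proof.
have hW : (\matrix_(k < n, m < n) (a (ι k) * (pp u m).[a (ι k)])) =
   diag_mx (\row_k (a (ι k) * (a (ι k) - u))) *m (\matrix_(i < n, l < n) a (ι i) ^+ l).
  apply/matrixP => k m; rewrite mul_diag_mx !mxE /pp.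
  rewrite hornerM hornerD hornerN hornerX hornerC hornerXn; ring.
have dV : \det (\matrix_(i < n, l < n) a (ι i) ^+ l) != 0.
  have -> : (\matrix_(i < n, l < n) a (ι i) ^+ l) = (Vandermonde n (\row_i a (ι i)))^T.
    by apply/matrixP => i l; rewrite !mxE.
  rewrite det_tr det_Vandermonde; apply/prodf_neq0 => i _; apply/prodf_neq0 => j hij.
  rewrite !mxE subr_eq0; apply: a_inj; apply/eqP => /(congr1 val) /= h.
  by move: hij; rewrite h ltnn.
have dT : \det (\matrix_(l < n, m < n) (QQ m)`_l) = \prod_(m < n) (m.+1%:R - n.+1%:R).
  rewrite -det_tr det_trig.
    by apply: eq_bigr => i _; rewrite !mxE QQ_coef_m.
  by apply/is_trig_mxP => i j hij; rewrite !mxE QQ_coef_gt.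
have bu : forall i : 'I_n, a (ι i) - u != 0.
  move=> i; rewrite subr_eq0; apply: a_inj; apply/eqP => /(congr1 val) /= h.
  by have := ltn_ord i; rewrite h ltnn.
have H := congr1 determinant EW.
rewrite !det_mulmx hW det_mulmx dT !det_diag in H.
have H2 : \det EE * \prod_(i < n) (a (ι i) * (a (ι i) - u)) =
    \prod_(i < n) (a (ι i) * (i.+1%:R - n.+1%:R)).
  apply: (mulIf dV).
  have e1 : \prod_i (\row_k (a (ι k) * (a (ι k) - u))) 0 i = \prod_(i < n) (a (ι i) * (a (ι i) - u)).
    by apply: eq_bigr => i _; rewrite mxE.
  have e2 : \prod_i (\row_k a (ι k)) 0 i = \prod_(i < n) a (ι i).
    by apply: eq_bigr => i _; rewrite mxE.
  rewrite e1 e2 in H; rewrite -mulrA H big_split /=; ring.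
have P0 : \prod_(i < n) (a (ι i) * (a (ι i) - u)) != 0.
  by apply/prodf_neq0 => i _; rewrite mulf_neq0 // a_nz.
have -> : \det EE = \prod_(i < n) (a (ι i) * (i.+1%:R - n.+1%:R)) /
   \prod_(i < n) (a (ι i) * (a (ι i) - u)) by rewrite -H2 mulfK.
rewrite -prodf_div -(prod_fact n) natr_prod -prodf_div.
apply: eq_bigr => i _.
have hi : (i <= n)%N by apply: ltnW.
rewrite natrB // !mulrSr.
have := bu i; have := a_nz (ι i) => h1 h2.
have h3 : u - a (ι i) != 0 by rewrite -opprB oppr_eq0.
field; rewrite h1 h2 h3 //.
Qed.

End Mat.

Section An.
Variable R : realType.

Lemma D1 n (f : 'rV[R]_n -> R) x v :
  'D_v f x = 'D_1 (fun h : R => f (h *: v + x)) 0.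
Proof.
rewrite /derive; do 2 f_equal; apply/funext => h /=.
by rewrite addr0 scale0r add0r [_%:A]mulr1.
Qed.

Lemma is_derive_aff (al c : R) : is_derive (0:R) 1 (fun h => al + h * c) c.
Proof.
have -> : (fun h => al + h * c) = cst al + (c \*: id).
  by apply/funext => h /=; rewrite mulrC.
apply: is_derive_eq.
by rewrite add0r [_ *: _]mulr1.
Qed.

Lemma is_derive_div (f g : R -> R) df dg : g 0 != 0 ->
  is_derive (0:R) 1 f df -> is_derive (0:R) 1 g dg ->
  is_derive (0:R) 1 (fun h => f h / g h) ((df * g 0 - f 0 * dg) / (g 0) ^+ 2).
Proof.
move=> g0 hf hg.
have -> : (fun h => f h / g h) = f * (fun h => (g h)^-1) by [].
have H := is_deriveM hf (is_deriveV g0 hg).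
apply: (is_derive_eq H).
rewrite /= [_ *: _]/GRing.scale /= [_ *: df]/GRing.scale /=.
change (- g 0 ^- 2 *: dg) with (- g 0 ^- 2 * dg); by field.
Qed.

Lemma is_derive_prod (I : eqType) (s : seq I) (P : pred I) (g : I -> R -> R) (dg : I -> R) :
  (forall j, P j -> is_derive (0:R) 1 (g j) (dg j)) ->
  (forall j, P j -> g j 0 != 0) ->
  is_derive (0:R) 1 (fun h => \prod_(j <- s | P j) g j h)
    ((\prod_(j <- s | P j) g j 0) * \sum_(j <- s | P j) dg j / g j 0).
Proof.
move=> hd hn; elim: s => [|x s IH].
  under eq_fun do rewrite big_nil.
  by rewrite !big_nil mul1r; exact: is_derive_cst.
under eq_fun do rewrite big_cons.
rewrite !big_cons; case: ifP => Px; last by [].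
have -> : (fun h => g x h * \prod_(j <- s | P j) g j h) = g x * (fun h => \prod_(j <- s | P j) g j h) by [].
have H := is_deriveM (hd x Px) IH.
apply: (is_derive_eq H).
rewrite /= [_ *: _]/GRing.scale /= [_ *: dg x]/GRing.scale /=.
have := hn x Px => h0.
by field.
Qed.

End An.

Section Main.
Variable R : realType.
Variable n : nat.
Local Notation ι := (widen_ord (leqnSn n)).

Lemma t_ext_widen (t : 'rV[R]_n) i : t_ext t (ι i) = t 0 i.
Proof.
rewrite /t_ext; case: ltnP => [h|h]; first by congr (t 0 _); apply/val_inj.
by have := ltn_ord i; rewrite /= ltnNge h.
Qed.

Lemma t_ext_max (t : 'rV[R]_n) : t_ext t ord_max = 1.
Proof. by rewrite /t_ext; case: ltnP => //= h; have := h; rewrite ltnn. Qed.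

Lemma t_ext_shift (t : 'rV[R]_n) (k : 'I_n) (h : R) j :
  t_ext (h *: delta_mx 0 k + t) j = t_ext t j + h * (j == ι k)%:R.
Proof.
rewrite /t_ext; case: ltnP => [hj|hj].
  rewrite !mxE /= addrC.
  have -> : (Ordinal hj == k) = (j == ι k) by [].
  by [].
have -> : (j == ι k) = false.
  by apply/eqP => /(congr1 val) /= e; have := ltn_ord k; rewrite -e ltnNge hj.
by rewrite mulr0 addr0.
Qed.


Lemma inD_nz (t : 'rV[R]_n) : inD t -> forall j, t_ext t j != 0.
Proof. by move=> [h _] j; rewrite gt_eqF. Qed.

Lemma inD_inj (t : 'rV[R]_n) : inD t -> forall i j, i != j -> t_ext t i != t_ext t j.
Proof.
move=> [_ h] i j; have [lt|gt|eq] := ltngtP i j => ne.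
- by rewrite lt_eqF // h.
- by rewrite gt_eqF // h.
- by move/eqP: ne; case; apply/val_inj.
Qed.

Lemma jac_entry (t : 'rV[R]_n) (ht : inD t) (i k : 'I_n) :
  'D_(delta_mx 0 k) (K (ι i)) t = K (ι i) t * EE (t_ext t) i k.
Proof.
rewrite D1.
set a := t_ext t.
set c := fun j : 'I_n.+1 => (j == ι k)%:R : R.
have anz := inD_nz ht; have ainj := inD_inj ht.
pose g := fun j (h : R) => (a j + h * c j) / ((a j - a (ι i)) + h * (c j - c (ι i))).
have -> : (fun h : R => K (ι i) (h *: delta_mx 0 k + t)) =
    (fun h => \prod_(j < n.+1 | j != ι i) g j h).
  apply: boolp.funext => h; rewrite /K; apply: eq_bigr => j _.
  rewrite /g !t_ext_shift /a /c; congr (_ / _); ring.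
pose dg := fun j => ((c j * (a j - a (ι i)) - a j * (c j - c (ι i))) / (a j - a (ι i)) ^+ 2).
have hd : forall j, j != ι i -> is_derive (0:R) 1 (g j) (dg j).
  move=> j' hj.
  have hne : a j' - a (ι i) != 0 by rewrite subr_eq0 ainj.
  have H := @is_derive_div R (fun h => a j' + h * c j')
     (fun h => (a j' - a (ι i)) + h * (c j' - c (ι i))) _ _ _
     (is_derive_aff _ _) (is_derive_aff _ _).
  rewrite /= mul0r addr0 in H.
  by apply: (is_derive_eq (H hne)); rewrite /dg !mul0r !addr0.
have hn : forall j, j != ι i -> g j 0 != 0.
  move=> j' hj; rewrite /g !mul0r !addr0 mulf_neq0 // ?invr_eq0 ?anz //.
  by rewrite subr_eq0 ainj.
have H := @is_derive_prod R _ (index_enum 'I_n.+1) (fun j => j != ι i) g dg hd hn.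
rewrite (@derive_val _ _ _ _ _ _ _ H) mxE /K; congr (_ * _).
  by apply: eq_bigr => j' _; rewrite /g !mul0r !addr0.
apply: eq_bigr => j' hj.
have hne : a j' - a (ι i) != 0 by rewrite subr_eq0 ainj.
have := anz j'; rewrite /g /dg /c !mul0r !addr0 -/a => h1.
by field; rewrite hne h1.
Qed.

End Main.

Unset Implicit Arguments.
Unset Strict Implicit.

Theorem lemma4p1 (R : realType) (n : nat) (hn : (1 <= n)%N) (t : 'rV[R]_n) :
  inD t ->
  \det (jacobianF t) =
    (n`!)%:R * \prod_(i < n) (K (widen_ord (leqnSn n) i) t / (1 - t 0 i)).
Proof.
move=> ht.
have -> : jacobianF t = diag_mx (\row_i K (widen_ord (leqnSn n) i) t) *m EE (t_ext t).
  by apply/matrixP => i k; rewrite mul_diag_mx !mxE jac_entry // mxE.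
rewrite det_mulmx det_diag (detEE (inD_inj ht) (inD_nz ht)) t_ext_max.
under eq_bigr do rewrite mxE.
under [X in _ * (_ / X)]eq_bigr do rewrite t_ext_widen.
rewrite prodf_div; ring.
Qed.
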